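(* Let $\mathbf{Z_1},\mathbf{Z_2},\mathbf{Z_3}\in\mathrm{GF}(2)^{6\times 30}$ be constructed from an arbitrary $\mathbf{z}\in\mathrm{GF}(2)^{2\times30}$ as follows: rows 1–2 of $\mathbf{Z_1}$ equal $\mathbf{z}$, rows 3–4 of $\mathbf{Z_1}$ equal $f$ applied to rows 1–2, rows 5–6 of $\mathbf{Z_1}$ equal $f$ applied to rows 3–4, $\mathbf{Z_2}=g(\mathbf{Z_1})$, $\mathbf{Z_3}=g(\mathbf{Z_2})$. Partition the 27 demand vectors $(d_1,d_2,d_3)\in\{A,B,C\}^3$ into five parts: Part 1: $AAA, BBB, CCC$; Part 2: $ABC, BCA, CAB$; Part 3: $ACB, CBA, BAC$; Part 4: $ABB, BAB, BBA, BCC, CBC, CCB, CAA, ACA, AAC$; Part 5: $ACC, CAC, CCA, CBB, BCB, BBC, BAA, ABA, AAB$. Then for any two demand vectors $D,D'$ in the same part, there is a column permutation $\pi$ in the group generated by $f$ and $g$ such that for every binary matrix $\mathbf{X}$ with 30 columns, if $\mathbf{X}$ is a valid delivery matrix for demand $D$ then $\pi(\mathbf{X})$ is a valid delivery matrix for demand $D'$ (and has the same number of rows).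
   Context: Three files $A=W_1$, $B=W_2$, $C=W_3$ are each split into 10 subfiles $A_1,\dots,A_{10}$, $B_1,\dots,B_{10}$, $C_1,\dots,C_{10}$, i.i.d. uniform; the information vector is $\mathbf{W}=[A_1,\dots,A_{10},B_1,\dots,B_{10},C_1,\dots,C_{10}]$, and a binary matrix $\mathbf{G}$ with 30 columns represents the linear code $\mathbf{G}\mathbf{W}^T$. Let $\mathbf{W_A}=[I_{10}\ 0\ 0]$, $\mathbf{W_B}=[0\ I_{10}\ 0]$, $\mathbf{W_C}=[0\ 0\ I_{10}]$ be the generator matrices of the files. User $i\in\{1,2,3\}$ caches $\mathbf{Z_i}\mathbf{W}^T$. For a demand vector $D=(d_1,d_2,d_3)\in\{A,B,C\}^3$ (user $i$ requests file $d_i$), a binary matrix $\mathbf{X}$ with 30 columns is a valid delivery matrix for $D$ if for each $i=1,2,3$, user $i$ can recover file $d_i$ from its cache and $\mathbf{X}\mathbf{W}^T$, i.e., $\operatorname{rank}\begin{bmatrix}\mathbf{Z_i}\\ \mathbf{X}\end{bmatrix}=\operatorname{rank}\begin{bmatrix}\mathbf{Z_i}\\ \mathbf{W_{d_i}}\\ \mathbf{X}\end{bmatrix}$ over $\mathrm{GF}(2)$. Column operations (applied to each row of a matrix with 30 columns): $f$ moves the coefficient of $A_i$ to the position of $B_i$, of $B_i$ to $C_i$, and of $C_i$ to $A_i$ ($i=1,\dots,10$), i.e., relabels files $A\mapsto B\mapsto C\mapsto A$; $g$ moves, within each file, the coefficient of subfile $i$ to subfile $i+3$ reduced into $\{1,\dots,9\}$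 modulo 9 (so $7\mapsto1$, $8\mapsto2$, $9\mapsto3$) for $1\le i\le 9$, and fixes subfile $10$. *)

(* Defs.v *)
From HB Require Import structures.
From mathcomp Require Import all_boot all_order all_algebra all_fingroup.
From Stdlib Require Import List.
From mathcomp Require Import zify.
Set Implicit Arguments. Unset Strict Implicit. Unset Printing Implicit Defensive.
Import GRing.Theory.

(* Coordinates of W (0-based): A_{i+1} at column i, B_{i+1} at 10+i,
   C_{i+1} at 20+i (i = 0..9).  Entries in GF(2) = 'F_2. *)

(* A column operation is represented by its "source map" s : 'I_30 -> 'I_30,
   acting on a matrix M by col_perm s M = \matrix_(i,j) M i (s j), i.e. the new
   coefficient at column j is the old coefficient at column (s j). *)

(* f : coefficient of A_i moves to B_i, B_i to C_i, C_i to A_i;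
   so the new coefficient at column j comes from column j - 10 (mod 30). *)
Definition fsrc (j : 'I_30) : 'I_30 := inord ((nat_of_ord j + 20) %% 30)%N.

(* g : within each file, subfile i (1..9) moves to subfile i+3 reduced mod 9
   into 1..9; subfile 10 fixed.  0-based in-file index p (0..8): new
   coefficient at p comes from (p + 6) mod 9; p = 9 fixed. *)
Definition gsrc (j : 'I_30) : 'I_30 :=
  let k := (j %/ 10)%N in let p := (j %% 10)%N in
  inord (if p == 9%N then nat_of_ord j else (10 * k + (p + 6) %% 9)%N).

Lemma fsrc_inj : injective fsrc.
Proof.
move=> [x hx] [y hy] /(congr1 val); rewrite /= !inordK ?ltn_mod // => h.
move: h => /= h; apply/val_inj => /=; lia.
Qed.

Lemma gsrc_lt (j : 'I_30) :
  ((if (j %% 10 == 9)%N then nat_of_ord j else 10 * (j %/ 10) + ((j %% 10) + 6) %% 9) < 30)%N.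
Proof. case: j => j hj /=; case: ifP => _ //; lia. Qed.

Lemma gsrc_inj : injective gsrc.
Proof.
move=> x y /(congr1 val); rewrite /gsrc /= !inordK ?gsrc_lt //.
case: x y => [x hx] [y hy] /= h; apply/val_inj => /=; move: h.
case: ifP => /eqP hx'; case: ifP => /eqP hy'; lia.
Qed.

Definition fperm : {perm 'I_30} := perm fsrc_inj.
Definition gperm : {perm 'I_30} := perm gsrc_inj.

Definition fg_group : {set {perm 'I_30}} := <<[set fperm; gperm]>>%g.

Local Open Scope ring_scope.

Definition Z1 (z : 'M['F_2]_(2, 30)) : 'M['F_2]_(2 + (2 + 2), 30) :=
  col_mx z (col_mx (col_perm fperm z) (col_perm fperm (col_perm fperm z))).
Definition Z2 z := col_perm gperm (Z1 z).
Definition Z3 z := col_perm gperm (Z2 z).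

Definition Zuser (z : 'M['F_2]_(2, 30)) (i : 'I_3) : 'M['F_2]_(2 + (2 + 2), 30) :=
  match nat_of_ord i with 0%N => Z1 z | 1%N => Z2 z | _ => Z3 z end.

Inductive file := FA | FB | FC.

Definition file_idx (d : file) : nat := match d with FA => 0 | FB => 1 | FC => 2 end.

(* Generator matrix of file d: W_A = [I 0 0], W_B = [0 I 0], W_C = [0 0 I]. *)
Definition Wfile (d : file) : 'M['F_2]_(10, 30) :=
  \matrix_(i < 10, j < 30) (nat_of_ord j == 10 * file_idx d + i)%N%:R.

Definition demand := (file * file * file)%type.

Definition dem_at (D : demand) (i : 'I_3) : file :=
  match nat_of_ord i with 0%N => D.1.1 | 1%N => D.1.2 | _ => D.2 end.

Definition valid_delivery (Z : 'I_3 -> 'M['F_2]_(2 + (2 + 2), 30))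
    (D : demand) (m : nat) (X : 'M['F_2]_(m, 30)) : Prop :=
  forall i : 'I_3,
    \rank (col_mx (Z i) X) = \rank (col_mx (Z i) (col_mx (Wfile (dem_at D i)) X)).

Definition parts : list (list demand) :=
  [:: [:: (FA,FA,FA); (FB,FB,FB); (FC,FC,FC)];
      [:: (FA,FB,FC); (FB,FC,FA); (FC,FA,FB)];
      [:: (FA,FC,FB); (FC,FB,FA); (FB,FA,FC)];
      [:: (FA,FB,FB); (FB,FA,FB); (FB,FB,FA); (FB,FC,FC); (FC,FB,FC);
          (FC,FC,FB); (FC,FA,FA); (FA,FC,FA); (FA,FA,FC)];
      [:: (FA,FC,FC); (FC,FA,FC); (FC,FC,FA); (FC,FB,FB); (FB,FC,FB);
          (FB,FB,FC); (FB,FA,FA); (FA,FB,FA); (FA,FA,FB)]].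

(* Main.v *)
Require Import Defs.
From HB Require Import structures.
From mathcomp Require Import all_boot all_order all_algebra all_fingroup.
From Stdlib Require Import List.
From mathcomp Require Import zify.
Set Implicit Arguments. Unset Strict Implicit. Unset Printing Implicit Defensive.
Import GRing.Theory.
Local Open Scope ring_scope.

Lemma f3 : (fperm * fperm * fperm = 1)%g.
Proof.
apply/permP=> j; apply/val_inj; rewrite !permM !permE /= /fsrc !inordK ?ltn_mod //.
case: j => j hj /=; lia.
Qed.

Lemma val_gsrc j : val (gsrc j) = (if (j %% 10 == 9)%N then nat_of_ord j else 10 * (j %/ 10) + ((j %% 10) + 6) %% 9)%N.
Proof. exact: (inordK (gsrc_lt j)). Qed.
Lemma val_fsrc j : val (fsrc j) = ((nat_of_ord j + 20) %% 30)%N.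
Proof. by apply: inordK; rewrite ltn_mod. Qed.

Lemma g3 : (gperm * gperm * gperm = 1)%g.
Proof.
apply/permP=> j; apply/val_inj; rewrite !permM !permE ?perm1 !val_gsrc.
case: j => j /=; do 30 (case: j => [//|j]); done.
Time Qed.
Lemma fgC : (fperm * gperm = gperm * fperm)%g.
Proof.
apply/permP=> j; apply/val_inj; rewrite !permM !permE !val_gsrc !val_fsrc ?val_gsrc.
case: j => j /=; do 30 (case: j => [//|j]); done.
Time Qed.

Lemma rk_perm m (A : 'M['F_2]_(m,30)) s : \rank (col_perm s A) = \rank A.
Proof. by rewrite col_permE mxrankMfree // row_free_unit unitmx_perm. Qed.

Lemma cp_col m1 m2 (A : 'M['F_2]_(m1,30)) (B : 'M['F_2]_(m2,30)) s :
  col_perm s (col_mx A B) = col_mx (col_perm s A) (col_perm s B).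
Proof. by rewrite !col_permE mul_col_mx. Qed.

Lemma eqmx_col m1 m2 m3 m4 (A : 'M['F_2]_(m1,30)) (B : 'M['F_2]_(m2,30))
  (A' : 'M['F_2]_(m3,30)) (B' : 'M['F_2]_(m4,30)) :
  (A :=: A')%MS -> (B :=: B')%MS -> (col_mx A B :=: col_mx A' B')%MS.
Proof.
move=> eA eB.
exact: eqmx_trans (eqmx_sym (addsmxE A B)) (eqmx_trans (adds_eqmx eA eB) (addsmxE A' B')).
Qed.

Lemma eqmx_cp m1 m2 (A : 'M['F_2]_(m1,30)) (B : 'M['F_2]_(m2,30)) s :
  (A :=: B)%MS -> (col_perm s A :=: col_perm s B)%MS.
Proof. by move=> e; rewrite !col_permE; apply: eqmxMr. Qed.

Lemma rot3 m1 m2 m3 (a : 'M['F_2]_(m1,30)) (b : 'M['F_2]_(m2,30)) (c : 'M['F_2]_(m3,30)) :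
  (col_mx b (col_mx c a) :=: col_mx a (col_mx b c))%MS.
Proof.
apply: eqmx_trans (eqmx_col (eqmx_refl b) (eqmx_sym (addsmxE c a))) _.
apply: eqmx_trans (eqmx_sym (addsmxE _ _)) _.
apply: eqmx_trans _ (eqmx_col (eqmx_refl a) (addsmxE b c)).
apply: eqmx_trans _ (addsmxE _ _).
rewrite addsmxA addsmxC; exact: eqmx_refl.
Qed.

Lemma step (Z : 'I_3 -> 'M['F_2]_(2 + (2 + 2), 30)) s D D' :
  (forall i', exists i, (col_perm s (Z i) :=: Z i')%MS /\
     (col_perm s (Wfile (dem_at D i)) :=: Wfile (dem_at D' i'))%MS) ->
  forall m (X : 'M['F_2]_(m, 30)), valid_delivery Z D X -> valid_delivery Z D' (col_perm s X).
Proof.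
move=> H m X V i'; have [i [e1 e2]] := H i'.
have := V i.
rewrite -(rk_perm (col_mx (Z i) X) s) -(rk_perm (col_mx (Z i) (col_mx _ X)) s) !cp_col.
move=> E.
rewrite -(eqmx_col e1 (eqmx_refl (col_perm s X))).1 E.
exact: (eqmx_col e1 (eqmx_col e2 (eqmx_refl _))).1.
Qed.

Lemma nf j : nat_of_ord (fsrc j) = ((nat_of_ord j + 20) %% 30)%N.
Proof. exact: val_fsrc. Qed.
Lemma ng j : nat_of_ord (gsrc j) = (if (j %% 10 == 9)%N then nat_of_ord j else 10 * (j %/ 10) + ((j %% 10) + 6) %% 9)%N.
Proof. exact: val_gsrc. Qed.

Lemma natR_eq (b1 b2 : bool) : (b1 <-> b2) -> (b1%:R = b2%:R :> 'F_2).
Proof. by case=> h1 h2; have -> : b1 = b2 by apply/idP/idP; [exact: h1 | exact: h2]. Qed.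

Definition fshift (d : file) : file := match d with FA => FB | FB => FC | FC => FA end.

Lemma FW d : col_perm fperm (Wfile d) = Wfile (fshift d).
Proof.
apply/matrixP => r j; rewrite !mxE permE nf; apply: natR_eq.
case: r j => [r hr] [j hj] /=.
by case: d => /=; split => /eqP h; apply/eqP; lia.
Qed.

Definition hrow (r : 'I_10) : 'I_10 := inord (if (r == 9 :> nat) then 9 else (r + 3) %% 9)%N.

Lemma GW d : (col_perm gperm (Wfile d) :=: Wfile d)%MS.
Proof.
have E : col_perm gperm (Wfile d) = rowsub hrow (Wfile d).
  apply/matrixP => r j; rewrite !mxE permE ng; apply: natR_eq.
  rewrite /hrow inordK; last by case: ifP => _ //; rewrite ltnS ltnW // ltn_mod.
  case: r j => [r hr] [j hj] /=.
  case: d => /=; case: ifP => /eqP h1; case: ifP => /eqP h2; split => /eqP h; apply/eqP; lia.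
have S : (col_perm gperm (Wfile d) <= Wfile d)%MS by rewrite E rowsub_sub.
apply/eqmxP; rewrite -(mxrank_leqif_eq S).2 rk_perm; exact: eqxx.
Qed.

Lemma cp3 m (A : 'M['F_2]_(m,30)) s : (s * s * s = 1)%g ->
  col_perm s (col_perm s (col_perm s A)) = A.
Proof. by move=> h; rewrite -!col_permM ?mulgA h col_perm1. Qed.

Lemma cp_fg m (A : 'M['F_2]_(m,30)) :
  col_perm fperm (col_perm gperm A) = col_perm gperm (col_perm fperm A).
Proof. by rewrite -!col_permM fgC. Qed.

Lemma Z1f z : (col_perm fperm (Z1 z) :=: Z1 z)%MS.
Proof. by rewrite /Z1 !cp_col cp3 ?f3 //; apply: rot3. Qed.

Lemma Zf z (i : 'I_3) : (col_perm fperm (Zuser z i) :=: Zuser z i)%MS.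
Proof.
case: i => [[|[|[|i]]] hi] //=; rewrite /Zuser /=.
- exact: Z1f.
- by rewrite /Z2 cp_fg; apply: eqmx_cp; apply: Z1f.
- by rewrite /Z3 /Z2 !cp_fg; do 2 apply: eqmx_cp; apply: Z1f.
Qed.

Definition demf (D : demand) : demand := (fshift D.1.1, fshift D.1.2, fshift D.2).
Definition demg (D : demand) : demand := (D.2, D.1.1, D.1.2).

Definition R z (D D' : demand) := exists2 pi : {perm 'I_30}, pi \in fg_group &
    forall (m : nat) (X : 'M['F_2]_(m, 30)),
      valid_delivery (Zuser z) D X -> valid_delivery (Zuser z) D' (col_perm pi X).

Lemma R_refl z D : R z D D.
Proof. by exists 1%g; [exact: group1 | move=> m X; rewrite col_perm1]. Qed.

Lemma R_trans z D1 D2 D3 : R z D1 D2 -> R z D2 D3 -> R z D1 D3.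
Proof.
move=> [p1 h1 v1] [p2 h2 v2]; exists (p2 * p1)%g; first exact: groupM.
by move=> m X V; rewrite col_permM; apply: v2; apply: v1.
Qed.

Lemma R_f z D : R z D (demf D).
Proof.
exists fperm; first by apply: mem_gen; rewrite !inE eqxx.
apply: step => i'; exists i'; split; first exact: Zf.
have -> : dem_at (demf D) i' = fshift (dem_at D i').
  by case: i' => [[|[|[|i]]] hi].
by rewrite FW; apply: eqmx_refl.
Qed.

Lemma R_g z D : R z D (demg D).
Proof.
exists gperm; first by apply: mem_gen; rewrite !inE eqxx orbT.
apply: step => -[[|[|[|i]]] hi] //.
- exists (Ordinal (isT : (2 < 3)%N)); split; last exact: GW.
  by rewrite /Zuser /= /Z3 /Z2 cp3 ?g3 //; apply: eqmx_refl.
- exists (Ordinal (isT : (0 < 3)%N)); split; last exact: GW.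
  exact: eqmx_refl.
- exists (Ordinal (isT : (1 < 3)%N)); split; last exact: GW.
  exact: eqmx_refl.
Qed.

Definition act (a b : nat) (D : demand) : demand := iter a demf (iter b demg D).

Lemma R_act z a b D : R z D (act a b D).
Proof.
rewrite /act; elim: a => [|a IH] /=.
  elim: b => [|b IH] /=; first exact: R_refl.
  exact: R_trans IH (R_g _ _).
exact: R_trans IH (R_f _ _).
Qed.

Definition feqb (x y : file) : bool := (file_idx x == file_idx y)%N.
Lemma feqbP x y : feqb x y -> x = y.
Proof. by case: x; case: y. Qed.
Definition deqb (x y : demand) : bool := [&& feqb x.1.1 y.1.1, feqb x.1.2 y.1.2 & feqb x.2 y.2].
Lemma deqbP x y : deqb x y -> x = y.
Proof. case: x => [[x1 x2] x3]; case: y => [[y1 y2] y3] /and3P [/= /feqbP h1 /feqbP h2 /feqbP h3]. by rewrite h1 h2 h3. Qed.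

Definition reachb (D D' : demand) : bool :=
  List.existsb (fun a => List.existsb (fun b => deqb (act a b D) D') [:: 0; 1; 2]%N) [:: 0; 1; 2]%N.

Lemma reachbP z D D' : reachb D D' -> R z D D'.
Proof.
move/List.existsb_exists => [a [_ /List.existsb_exists [b [_ /deqbP <-]]]].
exact: R_act.
Qed.

Lemma allcheck : List.forallb (fun P => List.forallb (fun D => List.forallb (fun D' => reachb D D') P) P) parts = true.
Proof. by vm_compute. Qed.

Theorem lemma1 (z : 'M['F_2]_(2, 30)) (P : list demand) (D D' : demand) :
  List.In P parts -> List.In D P -> List.In D' P ->
  exists2 pi : {perm 'I_30}, pi \in fg_group &
    forall (m : nat) (X : 'M['F_2]_(m, 30)),
      valid_delivery (Zuser z) D X ->
      valid_delivery (Zuser z) D' (col_perm pi X).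
Proof.
move=> HP HD HD'; apply: reachbP.
move: allcheck => /List.forallb_forall /(_ P HP) /List.forallb_forall /(_ D HD)
  /List.forallb_forall /(_ D' HD').
by [].
Qed.
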